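(* Let $m,n\in\mathbb{N}$ and $\epsilon>0$. Let $\Gamma\subseteq\mathbb{Z}_n$ and let $f:\mathbb{Z}_n\to\mathbb{C}$ be a $|\Gamma|$-sparse function of the form $f(x)=\sum_{\alpha\in\Gamma}\widehat f(\alpha)\chi_\alpha(x)$. Let $\ell:=\min(n,m)$ and let $g:\mathbb{Z}_m\to\mathbb{C}$ be defined by $g(x)=f(x)$ for $0\le x<\ell$ and $g(x)=0$ otherwise. Let $r=|\Gamma|\,\|f\|_2^2/(2\epsilon)$ and $\Gamma'=\bigcup_{\alpha\in\Gamma}\{\beta\in\mathbb{Z}_m:|\frac mn\alpha-\beta|_m\le r+1\}$. Then $\|g-g|_{\Gamma'}\|_2^2\le\epsilon$.
   Context: $\mathbb{Z}_n=\{0,\dots,n-1\}$ with addition mod $n$; elements are treated as these integer representatives. For $h:\mathbb{Z}_n\to\mathbb{C}$: $\langle h_1,h_2\rangle=\frac1n\sum_x h_1(x)\overline{h_2(x)}$, $\|h\|_2^2=\langle h,h\rangle$, $\chi_\alpha(x)=\exp(2\pi i\alpha x/n)$, $\widehat h(\alpha)=\langle h,\chi_\alpha\rangle$; analogously on $\mathbb{Z}_m$ with $m$ in place of $n$. For $\Gamma'\subseteq\mathbb{Z}_m$ and $h:\mathbb{Z}_m\to\mathbb{C}$, $h|_{\Gamma'}=\sum_{\beta\in\Gamma'}\widehat h(\beta)\chi_{\beta,m}$. For $k\in\mathbb{N}$, $x\in\mathbb{R}$: $|x|_k=\min\{|x-kz|:z\in\mathbb{Z}\}$. *)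

(* Defs.v *)
From mathcomp Require Import all_boot all_algebra complex.
From mathcomp Require Import all_classical all_reals all_analysis.
Set Implicit Arguments. Unset Strict Implicit. Unset Printing Implicit Defensive.
Import GRing.Theory Num.Theory.
Local Open Scope ring_scope.
Local Open Scope complex_scope.
Local Open Scope classical_set_scope.

(* Z_n is modelled by 'I_n = {0,..,n-1} (integer representatives);
   complex numbers are R[i] for a realType R. *)

Definition expi (R : realType) (t : R) : R[i] := Complex (cos t) (sin t).

Definition chi (R : realType) (n : nat) (alpha x : 'I_n) : R[i] :=
  expi (2 * pi * (alpha%:R * x%:R) / n%:R).

Definition inner (R : realType) (n : nat) (h1 h2 : 'I_n -> R[i]) : R[i] :=
  (n%:R)^-1 * \sum_(x < n) h1 x * (h2 x)^*.

Definition fhat (R : realType) (n : nat) (h : 'I_n -> R[i]) (alpha : 'I_n) : R[i] :=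
  inner h (chi R alpha).

Definition norm2sq (R : realType) (n : nat) (h : 'I_n -> R[i]) : R :=
  (n%:R)^-1 * \sum_(x < n) (Normc.normc (h x)) ^+ 2.

Definition restrictF (R : realType) (n : nat) (h : 'I_n -> R[i]) (G : {set 'I_n})
  : 'I_n -> R[i] :=
  fun x => \sum_(beta in G) fhat h beta * chi R beta x.

Definition distk (R : realType) (k : nat) (x : R) : R :=
  inf [set `|x - k%:R * z%:~R| | z in [set: int]].

(* Main.v *)
Require Import Defs.
From mathcomp Require Import all_boot all_algebra complex.
From mathcomp Require Import all_classical all_reals all_analysis.
Import GRing.Theory Num.Theory.
Local Open Scope ring_scope.
From mathcomp Require Import ring lra zify.
From mathcomp Require Import order.

Module M1.
Import Order.TTheory GRing.Theory Num.Theory.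
Set Implicit Arguments. Unset Strict Implicit.
Local Open Scope ring_scope.

Section S.
Variable R : realType.
Implicit Types (a b t : R).

Lemma expiD a b : expi (a + b) = expi a * expi b.
Proof. rewrite /expi cosD sinD /=. congr Complex; ring. Qed.
Lemma expiN a : (expi a)^* = expi (- a).
Proof. by rewrite /expi cosN sinN. Qed.
Lemma expi0 : expi (0:R) = 1.
Proof. by rewrite /expi cos0 sin0. Qed.
Lemma expiX a k : expi a ^+ k = expi (a *+ k).
Proof. elim: k => [|k IH]; first by rewrite expr0 mulr0n expi0.
by rewrite exprS IH mulrS expiD. Qed.
Lemma expi_2pin (k : nat) : expi (2 * pi * k%:R) = 1 :> R[i].
Proof.
have -> : 2 * pi * k%:R = 0 + (pi *+ 2) *+ k :> R by rewrite add0r -mulr_natr; ring.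
by rewrite /expi (periodicn (@cosD2pi R)) (periodicn (@sinD2pi R)) cos0 sin0.
Qed.

Lemma normc_sq (z : R[i]) : (Normc.normc z ^+ 2)%:C%C = z * z^*.
Proof. case: z => a b /=. rewrite sqr_sqrtr ?addr_ge0 ?sqr_ge0 //. congr Complex; ring. Qed.

Lemma normc_sqR (z : R[i]) : Normc.normc z ^+ 2 = complex.Re z ^+ 2 + complex.Im z ^+ 2.
Proof. case: z => a b /=. by rewrite sqr_sqrtr ?addr_ge0 ?sqr_ge0. Qed.

Lemma normc_real (x : R) : Normc.normc (x%:C%C) = `|x|.
Proof. by rewrite /= expr0n /= addr0 sqrtr_sqr. Qed.

Lemma normc_expi t : Normc.normc (expi t) = 1.
Proof. rewrite /= cos2Dsin2. exact: sqrtr1. Qed.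

Lemma geom (w : R[i]) (L : nat) : (w - 1) * \sum_(x < L) w ^+ x = w ^+ L - 1.
Proof.
elim: L => [|L IH]; first by rewrite big_ord0 mulr0 expr0 subrr.
by rewrite big_ord_recr /= mulrDr IH exprS; ring.
Qed.

Lemma cos_half t : cos t = 1 - 2 * sin (t / 2) ^+ 2.
Proof.
rewrite {1}(_ : t = (t / 2) *+ 2); last by rewrite -mulr_natr; field.
rewrite cos_mulr2n cos2sin2 -mulr_natl. ring.
Qed.

Lemma expi_neq1 t : sin (t / 2) != 0 -> expi t != 1.
Proof.
move=> s0; apply/negP => /eqP [] c1 _.
move: c1; rewrite cos_half => /eqP; rewrite subr_eq addrC -subr_eq subrr eq_sym.
by rewrite mulf_eq0 pnatr_eq0 /= expf_eq0 /= (negbTE s0).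
Qed.


Lemma sin_pi_neq0 (q : R) : -1 < q < 1 -> q != 0 -> sin (pi * q) != 0.
Proof.
move=> /andP[q1 q2] q0.
case: (ltgtP q 0) q0 => // qs _.
- rewrite -[q]opprK mulrN sinN oppr_eq0 lt0r_neq0 // sin_gt0_pi //.
  rewrite mulr_gt0 ?pi_gt0 ?oppr_gt0 //= -ltr_pdivlMl ?pi_gt0 // mulVf ?lt0r_neq0 ?pi_gt0 //.
  by rewrite ltrNl.
- rewrite lt0r_neq0 // sin_gt0_pi // mulr_gt0 ?pi_gt0 //= -ltr_pdivlMl ?pi_gt0 //.
  by rewrite mulVf ?lt0r_neq0 ?pi_gt0.
Qed.

Lemma ortho (k : nat) (a b : 'I_k) : (0 < k)%N ->
  \sum_(x < k) chi R a x * (chi R b x)^* = (a == b)%:R * k%:R.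
Proof.
move=> k0.
have kR : (k%:R : R) != 0 by rewrite pnatr_eq0 -lt0n.
set th : R := 2 * pi * ((a : nat)%:R - (b : nat)%:R) / k%:R.
have E : forall x : 'I_k, chi R a x * (chi R b x)^* = expi th ^+ x.
  move=> x; rewrite /chi expiN -expiD expiX; congr expi.
  rewrite -mulr_natr /th; field; exact: kR.
under eq_bigr do rewrite E.
case: eqVneq => [eab | nab].
  rewrite /th eab subrr mulr0 mul0r expi0.
  under eq_bigr do rewrite expr1n.
  by rewrite sumr_const card_ord mul1r.
rewrite mul0r.
have wk : expi th ^+ k = 1.
  rewrite expiX -mulr_natr (_ : th * k%:R = 2 * pi * (a : nat)%:R + - (2 * pi * (b : nat)%:R)).
    by rewrite expiD -expiN !expi_2pin conjC1 mulr1.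
  by rewrite /th; field.
have w1 : expi th != 1.
  apply: expi_neq1.
  rewrite (_ : th / 2 = pi * (((a : nat)%:R - (b : nat)%:R) / k%:R)); last by rewrite /th; field.
  apply: sin_pi_neq0.
  - have kp : (0 : R) < k%:R by rewrite ltr0n.
    rewrite ltr_pdivrMr // ltr_pdivlMr // mulN1r mul1r.
    have ha : ((a : nat)%:R : R) < k%:R by rewrite ltr_nat.
    have hb : ((b : nat)%:R : R) < k%:R by rewrite ltr_nat.
    have ha0 : (0 : R) <= (a : nat)%:R by [].
    have hb0 : (0 : R) <= (b : nat)%:R by [].
    apply/andP; split; lra.
  - rewrite mulf_neq0 ?invr_eq0 // subr_eq0 eqr_nat.
    exact: nab.
have := geom (expi th) k; rewrite wk subrr => /eqP; rewrite mulf_eq0 subr_eq0 (negbTE w1) /=.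
by move/eqP.
Qed.


Lemma chiC k (a x : 'I_k) : chi R a x = chi R x a.
Proof. by rewrite /chi [(a : nat)%:R * _]mulrC. Qed.

Lemma sum_delta k (F : 'I_k -> R[i]) (x : 'I_k) :
  \sum_(y < k) F y * (x == y)%:R = F x.
Proof.
rewrite (bigD1 x) //= eqxx mulr1 big1 ?addr0 // => y /negbTE.
by rewrite eq_sym => ->; rewrite mulr0.
Qed.

Lemma inversion k (h : 'I_k -> R[i]) (x : 'I_k) : (0 < k)%N ->
  h x = \sum_(b < k) fhat h b * chi R b x.
Proof.
move=> k0.
have kC : (k%:R : R[i]) != 0 by rewrite pnatr_eq0 -lt0n.
rewrite /fhat /inner.
transitivity (\sum_(y < k) (k%:R)^-1 * h y * \sum_(b < k) chi R x b * (chi R y b)^*).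
  rewrite (eq_bigr (fun y => ((k%:R)^-1 * k%:R * h y) * (x == y)%:R)).
    by rewrite sum_delta mulVf // mul1r.
  by move=> y _; rewrite ortho //; ring.
under eq_bigr do rewrite mulr_sumr.
rewrite exchange_big /=; apply: eq_bigr => b _.
rewrite mulr_sumr mulr_suml; apply: eq_bigr => y _.
rewrite [chi R x b]chiC [chi R y b]chiC; ring.
Qed.

Lemma parseval k (S : {set 'I_k}) (c : 'I_k -> R[i]) : (0 < k)%N ->
  norm2sq (fun x => \sum_(b in S) c b * chi R b x) = \sum_(b in S) Normc.normc (c b) ^+ 2.
Proof.
move=> k0.
have kC : (k%:R : R[i]) != 0 by rewrite pnatr_eq0 -lt0n.
apply: (@complexI R).
rewrite /norm2sq rmorphM fmorphV rmorph_nat !rmorph_sum /=.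
under eq_bigr do rewrite normc_sq.
under [RHS]eq_bigr do rewrite normc_sq.
transitivity ((k%:R)^-1 * \sum_(b in S) \sum_(b' in S)
   c b * (c b')^* * \sum_(x < k) chi R b x * (chi R b' x)^*).
  congr (_ * _).
  under eq_bigr do rewrite rmorph_sum /= mulr_suml.
  rewrite (eq_bigr (fun x => \sum_(b in S) \sum_(b' in S)
      c b * (c b')^* * (chi R b x * (chi R b' x)^*))); last first.
    move=> x _; apply: eq_bigr => b _; rewrite mulr_sumr; apply: eq_bigr => b' _.
    rewrite rmorphM /=; ring.
  rewrite exchange_big /=; apply: eq_bigr => b _.
  rewrite exchange_big /=; apply: eq_bigr => b' _.
  by rewrite mulr_sumr.
rewrite mulr_sumr; apply: eq_bigr => b bS.
under eq_bigr do rewrite ortho //.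
rewrite (bigD1 b) //= eqxx big1 ?addr0.
  by rewrite mul1r mulrCA mulVf // mulr1.
by move=> b' /andP[_ /negbTE]; rewrite eq_sym => ->; rewrite mul0r mulr0.
Qed.

End S.

End M1.
Import M1.

Module M2.
Import Order.TTheory GRing.Theory Num.Theory.
Import numFieldNormedType.Exports.
Local Open Scope classical_set_scope.
Set Implicit Arguments. Unset Strict Implicit.
Local Open Scope ring_scope.

Section S2.
Variable R : realType.
Implicit Types (a b t x : R).

Lemma jordan0 x : 0 <= x <= 1/2 -> 2 * x <= sin (pi * x).
Proof.
move=> /andP[x0 x1].
have pi0 := @pi_gt0 R.
case: (eqVneq x 0) => [-> | xn0]; first by rewrite !mulr0 sin0.
have xpos : 0 < x by rewrite lt0r xn0.
case: (eqVneq x (1/2)) => [-> | xn].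
  by rewrite mul1r sin_pihalf mulrC mulVf.
have xlt : x < 1/2 by rewrite lt_neqAle xn.
pose t : R := pi * x.
pose p : R := pi / 2.
have t0 : 0 < t by rewrite mulr_gt0.
have tp : t < p by rewrite /t /p (_ : pi / 2 = pi * (1/2)) ?ltr_pM2l // mul1r.
have c1 : {within `[0, t], continuous (@sin R)}.
  by apply: continuous_subspaceT => y; apply: continuous_sin.
have c2 : {within `[t, p], continuous (@sin R)}.
  by apply: continuous_subspaceT => y; apply: continuous_sin.
have [xi1 xi1i e1] := @MVT R sin cos 0 t t0 (fun y _ => is_derive_sin y) c1.
have [xi2 xi2i e2] := @MVT R sin cos t p tp (fun y _ => is_derive_sin y) c2.
move: xi1i xi2i; rewrite !in_itv /= => /andP[a1 a2] /andP[b1 b2].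
have pp : p <= pi by rewrite /p; lra.
have hx1 : xi1 \in `[0, pi] by rewrite in_itv /=; apply/andP; split; lra.
have hx2 : xi2 \in `[0, pi] by rewrite in_itv /=; apply/andP; split; lra.
have cle : cos xi2 <= cos xi1.
  by apply: ltW; rewrite (ltr_cos hx1 hx2); lra.
move: e1 e2; rewrite sin0 subr0 sin_pihalf => e1 e2.
set s := sin t in e1 e2 *.
have key : s * p - t = t * (p - t) * (cos xi1 - cos xi2).
  transitivity (s * (p - t) - t * (1 - s)); first by ring.
  by rewrite e2 e1; ring.
have : 0 <= s * p - t by rewrite key !mulr_ge0 ?subr_ge0 // ltW.
rewrite /p /t subr_ge0 => h.
rewrite -(@ler_pM2r _ (pi / 2)) ?divr_gt0 //.
apply: le_trans h; rewrite le_eqVlt; apply/orP; left; apply/eqP; by field.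
Qed.

Lemma sin_pi_sub y : sin (pi - y) = sin y :> R.
Proof. by rewrite sinB sinpi cospi; ring. Qed.

Lemma jordan x (D : R) : 0 <= x <= 1 -> D <= x -> D <= 1 - x -> 2 * D <= sin (pi * x).
Proof.
move=> /andP[x0 x1] Dx Dx'.
case: (lerP x (1/2)) => xh.
  apply: (le_trans (y := 2 * x)); first by rewrite ler_pM2l.
  by apply: jordan0; rewrite x0 xh.
rewrite -sin_pi_sub (_ : pi - pi * x = pi * (1 - x)); last by ring.
apply: (le_trans (y := 2 * (1 - x))); first by rewrite ler_pM2l.
apply: jordan0; apply/andP; split; lra.
Qed.

End S2.

End M2.
Import M2.

Module M3.
Import Order.TTheory GRing.Theory Num.Theory.
Set Implicit Arguments. Unset Strict Implicit.
Local Open Scope ring_scope.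

Section S3.
Variable R : realType.

Lemma normc_ge0 (z : R[i]) : 0 <= Normc.normc z.
Proof. by case: z => a b /=; rewrite sqrtr_ge0. Qed.

Lemma kernel_bound (th : R) (L : nat) : sin (th / 2) != 0 ->
  Normc.normc (\sum_(x < L) expi (th *+ x)) <= `|sin (th / 2)|^-1.
Proof.
move=> s0; set s := sin (th / 2).
have e := geom (expi th) L.
under eq_bigr do rewrite -expiX.
have nw : Normc.normc (expi th - 1) = 2 * `|s|.
  have h2 : Normc.normc (expi th - 1) ^+ 2 = (2 * s) ^+ 2.
    rewrite normc_sqR /expi /=.
    have hc := cos_half th. have hs := sin2cos2 th.
    rewrite -/s in hc.
    rewrite (_ : (sin th + - 0) ^+ 2 = sin th ^+ 2); last by rewrite oppr0 addr0.
    rewrite hs hc; ring.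
  rewrite -[LHS]ger0_norm ?normc_ge0 // -sqrtr_sqr h2 sqrtr_sqr normrM.
  by rewrite ger0_norm.
have nL : Normc.normc (expi th ^+ L - 1) <= 2.
  apply: le_trans (le_normcD _ _) _.
  by rewrite normcN expiX normc_expi Normc.normc1.
have sp : 0 < `|s| by rewrite normr_gt0.
have := Normc.normcM (expi th - 1) (\sum_(i < L) expi th ^+ i).
rewrite e nw => eq.
rewrite -(@ler_pM2l _ (2 * `|s|)) ?mulr_gt0 // -eq.
apply: le_trans nL _; rewrite le_eqVlt; apply/orP; left; apply/eqP; field.
by rewrite normr_eq0.
Qed.

Definition Fcut (r x : R) : R := if r + 1 < x then (x ^+ 2)^-1 else 0.

Lemma Fcut_ge0 r x : 0 <= Fcut r x.
Proof. by rewrite /Fcut; case: ifP => // _; rewrite invr_ge0 sqr_ge0. Qed.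

Lemma tele_ord (G : nat -> R) M : \sum_(j < M) (G j - G j.+1) = G 0%N - G M.
Proof.
elim: M => [|M IH]; first by rewrite big_ord0 subrr.
by rewrite big_ord_recr /= IH; ring.
Qed.

Lemma tel (r psi : R) M : 0 < r -> psi <= 1 ->
  \sum_(j < M) Fcut r (psi + j%:R) <= r^-1.
Proof.
move=> r0 psi1.
pose H x := (Num.max r x)^-1.
have Hpos : forall x, 0 < Num.max r x by move=> x; rewrite lt_max r0.
have H0 : forall x, 0 <= H x by move=> x; rewrite /H invr_ge0 ltW.
have HF : forall x, Fcut r x <= H (x - 1) - H x.
  move=> x; rewrite /Fcut /H; case: ifP => h.
    rewrite max_r; last lra. rewrite max_r; last lra.
    have x0 : x != 0 by apply/eqP => x2; lra.
    have x1 : x - 1 != 0 by apply/eqP => x2; lra.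
    rewrite (_ : (x - 1)^-1 - x^-1 = (x * (x - 1))^-1); last by field; rewrite x0 x1.
    rewrite lef_pV2 ?posrE ?exprn_gt0 ?mulr_gt0 //; try lra.
  rewrite subr_ge0 lef_pV2 ?posrE //.
  rewrite ge_max !le_max lexx /=. by apply/orP; right; lra.
apply: le_trans (ler_sum _ (fun j _ => HF (psi + (nat_of_ord j)%:R))) _.
rewrite (eq_bigr (fun j : 'I_M => H (psi + (j : nat)%:R - 1) - H (psi + (j.+1)%:R - 1))); last first.
  by move=> j _; congr (H _ - H _); rewrite -natr1; ring.
rewrite (tele_ord (fun j => H (psi + j%:R - 1))) /= addr0.
rewrite /H max_l; last lra.
by rewrite lerBlDr lerDl H0.
Qed.

Lemma tel_inj (r psi : R) M (h : 'I_M -> 'I_M) : 0 < r -> psi <= 1 -> injective h ->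
  \sum_(j < M) Fcut r (psi + (h j : nat)%:R) <= r^-1.
Proof.
move=> r0 p1 hi.
by have := @tel r psi M r0 p1; rewrite (reindex_inj hi).
Qed.

Lemma cs (I : finType) (P : pred I) (a b : I -> R) :
  (\sum_(i | P i) a i * b i) ^+ 2 <=
  (\sum_(i | P i) a i ^+ 2) * (\sum_(i | P i) b i ^+ 2).
Proof.
set A := \sum_(i | P i) a i ^+ 2.
set B := \sum_(i | P i) a i * b i.
set C := \sum_(i | P i) b i ^+ 2.
have A0 : 0 <= A by rewrite sumr_ge0 // => i _; rewrite sqr_ge0.
have key : \sum_(i | P i) (A * b i - B * a i) ^+ 2 = A * (A * C - B ^+ 2).
  rewrite (eq_bigr (fun i => A ^+ 2 * b i ^+ 2 + ((- (2 * A * B)) * (a i * b i) + B ^+ 2 * a i ^+ 2)));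
    last by move=> i _; ring.
  rewrite big_split /= big_split /= -!mulr_sumr -/A -/B -/C; ring.
have : 0 <= A * (A * C - B ^+ 2) by rewrite -key sumr_ge0 // => i _; rewrite sqr_ge0.
case: (ltrP 0 A) => [Ap | Anp].
  by rewrite pmulr_rge0 // subr_ge0.
have A00 : A = 0 by apply/eqP; rewrite eq_le Anp A0.
have ai : forall i, P i -> a i = 0.
  move=> i Pi; apply/eqP; rewrite -sqrf_eq0; apply/eqP.
  by move: i Pi; apply/psumr_eq0P => // i _; rewrite sqr_ge0.
have -> : B = 0 by rewrite /B big1 // => i Pi; rewrite ai // mul0r.
by move=> _; rewrite A00 expr0n /= mul0r.
Qed.

Lemma normc_sum (I : finType) (P : pred I) (F : I -> R[i]) :
  Normc.normc (\sum_(i | P i) F i) <= \sum_(i | P i) Normc.normc (F i).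
Proof.
elim/big_rec2: _ => [|i y1 y2 _ h]; first by rewrite Normc.normc0.
apply: le_trans (le_normcD _ _) _; by rewrite lerD2l.
Qed.

Lemma csc (I : finType) (P : pred I) (a K : I -> R[i]) :
  Normc.normc (\sum_(i | P i) a i * K i) ^+ 2 <=
  (\sum_(i | P i) Normc.normc (a i) ^+ 2) * (\sum_(i | P i) Normc.normc (K i) ^+ 2).
Proof.
have h := @normc_sum I P (fun i => a i * K i).
rewrite (eq_bigr (fun i => Normc.normc (a i) * Normc.normc (K i))) in h; last by move=> i _; rewrite Normc.normcM.
have h1 : Normc.normc (\sum_(i | P i) a i * K i) ^+ 2 <=
   (\sum_(i | P i) Normc.normc (a i) * Normc.normc (K i)) ^+ 2.
  by rewrite !expr2; apply: ler_pM; rewrite ?normc_ge0.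
exact: (le_trans h1 (@cs I P (fun i => Normc.normc (a i)) (fun i => Normc.normc (K i)))).
Qed.

End S3.

End M3.
Import M3.

Module M4.
Import Order.TTheory GRing.Theory Num.Theory.
Set Implicit Arguments. Unset Strict Implicit.
Local Open Scope classical_set_scope.
Local Open Scope ring_scope.

Definition c0f (m n a : nat) := ((m * a) %/ n)%N.
Definition jf (c0 m b : nat) := if (b <= c0)%N then (c0 - b)%N else (c0 + m - b)%N.

Lemma jf_lt c0 m b : (c0 < m)%N -> (b < m)%N -> (jf c0 m b < m)%N.
Proof. rewrite /jf; case: ifP; lia. Qed.

Lemma jf_inj c0 m b1 b2 : (c0 < m)%N -> (b1 < m)%N -> (b2 < m)%N ->
  jf c0 m b1 = jf c0 m b2 -> b1 = b2.
Proof. rewrite /jf; case: ifP; case: ifP; lia. Qed.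

Section S4.
Variable R : realType.

Definition uu (m n a b : nat) : R := ((m * a) %% n)%:R / n%:R + (jf (c0f m n a) m b)%:R.

Lemma step4 (m n l : nat) (r : R) (a : 'I_n) (b : 'I_m) :
  (0 < n)%N -> (0 < m)%N -> 0 <= r ->
  r + 1 < distk m (m%:R / n%:R * (a : nat)%:R - (b : nat)%:R) ->
  Normc.normc ((m%:R : R[i])^-1 * \sum_(i < l)
      expi ((2 * pi * ((a : nat)%:R / n%:R - (b : nat)%:R / m%:R)) *+ i)) ^+ 2
  <= (Fcut r (uu m n a b) + Fcut r (m%:R - uu m n a b)) / 4.
Proof.
move=> n0 m0 r0 hd.
set c' : R := m%:R / n%:R * (a : nat)%:R - (b : nat)%:R.
set th : R := 2 * pi * ((a : nat)%:R / n%:R - (b : nat)%:R / m%:R).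
set c0 := c0f m n a.
set phi : R := ((m * a) %% n)%:R / n%:R.
set u := uu m n a b.
have nR : (0 : R) < n%:R by rewrite ltr0n.
have mR : (0 : R) < m%:R by rewrite ltr0n.
have nR0 : (n%:R : R) != 0 by rewrite lt0r_neq0.
have mR0 : (m%:R : R) != 0 by rewrite lt0r_neq0.
have c0m : (c0 < m)%N by rewrite /c0 /c0f ltn_divLR // ltn_pmul2l.
have phi0 : 0 <= phi by rewrite /phi divr_ge0.
have phi1 : phi < 1.
  by rewrite /phi ltr_pdivrMr // mul1r ltr_nat ltn_pmod.
have hcd : m%:R / n%:R * (a : nat)%:R = c0%:R + phi.
  have e := divn_eq (m * a) n.
  have e' : ((m * a)%N%:R : R) = c0%:R * n%:R + ((m * a) %% n)%:R.
    by rewrite -natrM -natrD -e.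
  rewrite /phi; move: e'; rewrite natrM => e'.
  apply: (@mulIf _ n%:R) => //; rewrite mulrDl divfK // -e'; (field; rewrite ?nR0 ?mR0 ?andbT //).
have jm : (jf c0 m b < m)%N by apply: jf_lt.
have hu : u = phi + (jf c0 m b)%:R by [].
have cases : c' = u \/ c' = u - m%:R.
  rewrite /c' hcd hu /jf; case: ifP => hb.
    by left; rewrite natrB //; ring.
  right; rewrite natrB; last by have := ltn_ord b; lia.
  rewrite natrD; ring.
have u0 : 0 <= u by rewrite hu addr_ge0.
have um : u < m%:R.
  have : ((jf c0 m b).+1%:R : R) <= m%:R by rewrite ler_nat.
  rewrite -natr1 hu; lra.
set E := [set `|c' - m%:R * z%:~R| | z in [set: int]].
have hE : has_lbound E by exists 0 => y [z _ <-].
have dinf : forall y, E y -> distk m c' <= y by move=> y Ey; exact: ge_inf hE y Ey.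
have du : distk m c' <= u.
  apply: dinf; rewrite /E; case: cases => ->.
    by exists 0 => //; rewrite mulr0 subr0 ger0_norm.
  by exists (-1) => //; rewrite rmorphN1 mulrN1 opprK subrK ger0_norm.
have dmu : distk m c' <= m%:R - u.
  apply: dinf; rewrite /E; case: cases => ->.
    by exists 1 => //; rewrite mulr1 distrC ger0_norm // subr_ge0 ltW.
  by exists 0 => //; rewrite mulr0 subr0 distrC ger0_norm // subr_ge0 ltW.
rewrite -/c' in hd.
pose D := if u <= m%:R - u then u else m%:R - u.
have Du : D <= u by rewrite /D; case: ifP => h //; lra.
have Dmu : D <= m%:R - u by rewrite /D; case: ifP => h //; lra.
have dD : distk m c' <= D by rewrite /D; case: ifP.
have rD : r + 1 < D by apply: lt_le_trans dD.
have D0 : 0 < D by lra.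
have FD : Fcut r D <= Fcut r u + Fcut r (m%:R - u).
  rewrite /D; case: ifP => _.
    by rewrite lerDl Fcut_ge0.
  by rewrite lerDr Fcut_ge0.
have sinb : 2 * (D / m%:R) <= sin (pi * (u / m%:R)).
  apply: jordan.
  - by apply/andP; split; [rewrite divr_ge0 // ltW | rewrite ler_pdivrMr // mul1r ltW].
  - by rewrite ler_pM2r ?invr_gt0.
  - rewrite (_ : 1 - u / m%:R = (m%:R - u) / m%:R); last by (field; rewrite ?nR0 ?mR0 ?andbT //).
    by rewrite ler_pM2r ?invr_gt0.
have spos : 0 < sin (pi * (u / m%:R)).
  by apply: lt_le_trans sinb; rewrite mulr_gt0 ?divr_gt0.
have sineq : `|sin (th / 2)| = sin (pi * (u / m%:R)).
  have -> : th / 2 = pi * (c' / m%:R) by rewrite /th /c'; (field; rewrite ?nR0 ?mR0 ?andbT //).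
  case: cases => ->; first by rewrite ger0_norm // ltW.
  rewrite (_ : pi * ((u - m%:R) / m%:R) = - (pi - pi * (u / m%:R))); last by (field; rewrite ?nR0 ?mR0 ?andbT //).
  by rewrite sinN normrN sin_pi_sub ger0_norm // ltW.
have s0 : sin (th / 2) != 0 by rewrite -normr_eq0 sineq lt0r_neq0.
have kb := kernel_bound l s0.
rewrite sineq in kb.
have mC : (m%:R : R[i])^-1 = ((m%:R : R)^-1)%:C%C by rewrite fmorphV rmorph_nat.
rewrite Normc.normcM mC normc_real ger0_norm; last by rewrite invr_ge0 ltW.
set N := Normc.normc _.
have N0 : 0 <= N by apply: normc_ge0.
have hN : (m%:R)^-1 * N <= (2 * D)^-1.
  apply: le_trans (ler_wpM2l _ kb) _; first by rewrite invr_ge0 ltW.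
  rewrite -invfM lef_pV2 ?posrE ?mulr_gt0 //.
  by move: sinb; rewrite -(ler_pM2l mR) mulrA mulrCA mulfV // mulr1 mulrC.
apply: (@le_trans _ _ (Fcut r D / 4)).
  apply: (@le_trans _ _ (((2 * D)^-1) ^+ 2)).
    by rewrite !expr2 ler_pM // mulr_ge0 // invr_ge0 ltW.
  rewrite /Fcut rD le_eqVlt; apply/orP; left; apply/eqP; field.
  by rewrite lt0r_neq0.
by rewrite ler_pM2r // invr_gt0.
Qed.


Lemma step5 (m n : nat) (r : R) (a : 'I_n) :
  (0 < n)%N -> (0 < m)%N -> 0 < r ->
  \sum_(b < m) (Fcut r (uu m n a b) + Fcut r (m%:R - uu m n a b)) <= 2 * r^-1.
Proof.
move=> n0 m0 r0.
set c0 := c0f m n a.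
set phi : R := ((m * a) %% n)%:R / n%:R.
have nR : (0 : R) < n%:R by rewrite ltr0n.
have c0m : (c0 < m)%N by rewrite /c0 /c0f ltn_divLR // ltn_pmul2l.
have phi0 : 0 <= phi by rewrite /phi divr_ge0.
have phi1 : phi <= 1.
  by rewrite /phi ler_pdivrMr // mul1r ler_nat ltnW // ltn_pmod.
pose h (b : 'I_m) : 'I_m := Ordinal (jf_lt c0m (ltn_ord b)).
have hi : injective h.
  move=> b1 b2 /(congr1 val) /= e; apply: val_inj => /=.
  exact: (jf_inj c0m (ltn_ord b1) (ltn_ord b2) e).
rewrite big_split /= mulr2n mulrDl mul1r.
apply: lerD.
  exact: (tel_inj (psi := phi) r0 phi1 hi).
have e : forall b : 'I_m, m%:R - uu m n a b = (1 - phi) + ((rev_ord (h b) : nat))%:R.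
  move=> b; rewrite /uu -/c0 -/phi /= natrB; last by apply: jf_lt.
  rewrite -natr1; ring.
under eq_bigr do rewrite e.
apply: (tel_inj (psi := 1 - phi) (h := fun b => rev_ord (h b))) r0 _ _.
  lra.
by move=> b1 b2 /rev_ord_inj /hi.
Qed.

End S4.

End M4.
Import M4.

Module M5.
Import Order.TTheory GRing.Theory Num.Theory.
Local Open Scope ring_scope.

Lemma sum_sub_le (R : realType) (I : finType) (A : pred I) (F : I -> R) :
  (forall i, 0 <= F i) -> \sum_(i | A i) F i <= \sum_i F i.
Proof.
move=> F0; rewrite big_mkcond /=; apply: ler_sum => i _.
by case: ifP => // _; apply: F0.
Qed.


End M5.
Import M5.

Unset Implicit Arguments. Set Strict Implicit.
Import Order.TTheory GRing.Theory Num.Theory.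
Close Scope classical_set_scope.
Local Open Scope ring_scope.

Theorem proposition4p2 (R : realType) (m n : nat) (eps : R)
  (Gamma : {set 'I_n}) (f : 'I_n -> R[i]) :
  (0 < n)%N -> (0 < m)%N -> 0 < eps ->
  (forall x : 'I_n, f x = \sum_(alpha in Gamma) fhat f alpha * chi R alpha x) ->
  let l := minn n m in
  forall g : 'I_m -> R[i],
  (forall (x : 'I_m) (y : 'I_n), (x : nat) = (y : nat) -> (x < l)%N -> g x = f y) ->
  (forall x : 'I_m, (l <= x)%N -> g x = 0) ->
  let r : R := #|Gamma|%:R * norm2sq f / (2 * eps) in
  let Gamma' : {set 'I_m} :=
    [set beta : 'I_m | [exists alpha in Gamma,
       distk m (m%:R / n%:R * (alpha : nat)%:R - (beta : nat)%:R) <= r + 1]] in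
  norm2sq (fun x => g x - restrictF g Gamma' x) <= eps.
Proof.
move=> n0 m0 e0 hf l g hg1 hg2; cbv zeta.
set r : R := #|Gamma|%:R * norm2sq f / (2 * eps).
set G' := [set beta : 'I_m | _].
have lm : (l <= m)%N by rewrite /l geq_minr.
have ln : (l <= n)%N by rewrite /l geq_minl.
have nR0 : (n%:R : R) != 0 by rewrite pnatr_eq0 -lt0n.
have mR0 : (m%:R : R) != 0 by rewrite pnatr_eq0 -lt0n.
set NF := norm2sq f.
have hNF : NF = \sum_(a in Gamma) Normc.normc (fhat f a) ^+ 2.
  have := parseval Gamma (fhat f) n0; rewrite /norm2sq /NF => <-.
  congr (_ * _); apply: eq_bigr => x _; by rewrite -hf.
pose th (a : 'I_n) (b : 'I_m) : R := 2 * pi * ((a : nat)%:R / n%:R - (b : nat)%:R / m%:R).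
pose K a b : R[i] := (m%:R)^-1 * \sum_(i < l) expi (th a b *+ i).
have ghat : forall b, fhat g b = \sum_(a in Gamma) fhat f a * K a b.
  move=> b; rewrite /fhat /inner.
  pose P (i : nat) := \sum_(a in Gamma) fhat f a * expi (th a b *+ i).
  have hx : forall x : 'I_m, g x * (chi R b x)^* = if ((x : nat) < l)%N then P x else 0.
    move=> x; case: ifP => xl; last by rewrite hg2 ?mul0r // leqNgt xl.
    have xn : ((x : nat) < n)%N by apply: leq_trans xl ln.
    rewrite (hg1 x (Ordinal xn)) // (hf (Ordinal xn)) mulr_suml; apply: eq_bigr => a _.
    rewrite -mulrA; congr (_ * _).
    rewrite /chi expiN -expiD; congr expi.
    rewrite -mulr_natr /th /=; field; rewrite ?nR0 ?mR0 //.
  under eq_bigr do rewrite hx.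
  rewrite -big_mkcond -big_ord_widen //= /P exchange_big mulr_sumr /=.
  apply: eq_bigr => a _; rewrite /K -mulr_sumr /fhat /inner; ring.
have E1 : norm2sq (fun x => g x - restrictF g G' x) =
    \sum_(b in ~: G') Normc.normc (fhat g b) ^+ 2.
  rewrite -(parseval (~: G') (fhat g) m0); congr norm2sq; apply: funext => x /=.
  rewrite {1}(inversion g x m0) /restrictF (bigID (fun b => b \in G')) /=.
  rewrite addrC addrK; apply: eq_bigl => b; by rewrite finset.in_setC.
rewrite E1.
have B1 : forall b, Normc.normc (fhat g b) ^+ 2 <= NF * \sum_(a in Gamma) Normc.normc (K a b) ^+ 2.
  by move=> b; rewrite ghat hNF; apply: csc.
have NF0 : 0 <= NF by rewrite hNF sumr_ge0 // => a _; rewrite sqr_ge0.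
apply: le_trans (ler_sum _ (fun b _ => B1 b)) _.
rewrite -mulr_sumr exchange_big /=.
case: (eqVneq NF 0) => [NFz | NFnz].
  by rewrite NFz mul0r ltW.
have G0 : (0 < #|Gamma|)%N.
  rewrite lt0n; apply/negP => /eqP /cards0_eq G0.
  by move: NFnz; rewrite hNF G0 big_set0 eqxx.
have NFp : 0 < NF by rewrite lt0r NFnz NF0.
have GR : (0 : R) < #|Gamma|%:R by rewrite ltr0n.
have r0 : 0 < r.
  rewrite /r; apply: divr_gt0; first exact: mulr_gt0.
  by apply: mulr_gt0.
have B2 : forall a, a \in Gamma ->
    \sum_(b in ~: G') Normc.normc (K a b) ^+ 2 <= (2 * r)^-1.
  move=> a aG.
  apply: (@le_trans _ _ (\sum_(b in ~: G') (Fcut r (uu R m n a b) + Fcut r (m%:R - uu R m n a b)) / 4)).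
    apply: ler_sum => b; rewrite finset.in_setC finset.inE negb_exists => /forallP /(_ a).
    rewrite aG /= -ltNge => hd.
    exact: step4 n0 m0 (ltW r0) hd.
  apply: (@le_trans _ _ (\sum_(b < m) (Fcut r (uu R m n a b) + Fcut r (m%:R - uu R m n a b)) / 4)).
    by apply: sum_sub_le => b; rewrite divr_ge0 // addr_ge0 // Fcut_ge0.
  rewrite -mulr_suml.
  apply: le_trans (ler_wpM2r _ (step5 a n0 m0 r0)) _; first by rewrite invr_ge0.
  rewrite le_eqVlt; apply/orP; left; apply/eqP; field.
  by rewrite lt0r_neq0.
apply: le_trans (ler_wpM2l NF0 (ler_sum _ B2)) _.
rewrite sumr_const /r -/NF -[_ *+ #|Gamma|]mulr_natr le_eqVlt; apply/orP; left; apply/eqP; field.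
by rewrite NFnz !lt0r_neq0.
Qed.
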